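(* Let $\mathcal{E}$ be a metric space, $\lambda,\kappa,\mu\colon\mathcal{E}\to[0,\infty)$ continuous, $t\ge0$, $J$ an $\mathcal{E}$-valued càdlàg process, $J_n=J$ for all $n$, and let $I(a)=\inf_{\gamma\in\mathcal{R}(t)}\ell(\gamma;a)$ for $a\in\mathbb{R}$. Then $I(a)=0$ if and only if $a\in\mathcal{R}(t)$. If $I(a)>0$ for some $a\in\mathbb{R}$, then exactly one of the following holds: (1) $a<c_-:=\inf\mathcal{R}(t)$ and $I(b)=\ell(c_-;b)$ for all $b\in(-\infty,c_-]$; (2) $a>c_+:=\sup\mathcal{R}(t)$ and $I(b)=\ell(c_+;b)$ for all $b\in[c_+,\infty)$; (3) neither of the previous cases holds and $I(b)=\min\{\ell(c_-;b),\ell(c_+;b)\}$ for all $b\in[c_-,c_+]$, where $c_-=\sup(\mathcal{R}(t)\cap(-\infty,a))$ and $c_+=\inf(\mathcal{R}(t)\cap(a,\infty))$.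
   Context: $\phi_t(f)=\int_0^t\lambda(f(s))\exp(-\kappa(f(s))\int_s^t\mu(f(r))\,dr)\,ds$. $\mathcal{R}(t)$ (attainable parameters) is the set of $\gamma\in[0,\infty)$ such that for every $\epsilon>0$ there is $N_\epsilon$ with $\mathbb{P}(\phi_t(J_n)\in(\gamma-\epsilon,\gamma+\epsilon))>0$ for all $n\ge N_\epsilon$; it is a non-empty closed subset of $[0,\infty)$. For $\gamma\ge0$: $\ell(\gamma;a)=\infty$ for $a<0$, $\ell(\gamma;0)=\gamma$, $\ell(\gamma;a)=\gamma-a+a\log(a/\gamma)$ for $a>0$ (equal to $\infty$ if $\gamma=0$). *)

(* Defs.v *)
From HB Require Import structures.
From mathcomp Require Import all_boot all_order all_algebra.
From mathcomp Require Import all_classical all_reals all_analysis.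
Set Implicit Arguments. Unset Strict Implicit. Unset Printing Implicit Defensive.
Import Order.TTheory GRing.Theory Num.Theory.
Import numFieldNormedType.Exports.
Local Open Scope classical_set_scope.
Local Open Scope ring_scope.

Definition borel_set {E : topologicalType} (B : set E) : Prop :=
  (<<s [set U : set E | open U] >>) B.

Definition cadlag {R : realType} {E : topologicalType} (f : R -> E) : Prop :=
  (forall s, 0 <= s -> f x @[x --> s^'+] --> f s) /\
  (forall s, 0 < s -> exists l : E, f x @[x --> s^'-] --> l).

Definition phi {R : realType} {E : Type} (lam kap mu : E -> R) (t : R)
    (f : R -> E) : R :=
  Rintegral lebesgue_measure `[0, t]
    (fun s => lam (f s) *
       expR (- (kap (f s) * Rintegral lebesgue_measure `[s, t] (fun r => mu (f r))))).

Definition attainable {R : realType} {E : Type} {d : measure_display}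
    {Omega : measurableType d} (P : probability Omega R)
    (lam kap mu : E -> R) (t : R) (Jn : nat -> Omega -> R -> E) : set R :=
  [set gam : R | 0 <= gam /\
     forall eps : R, 0 < eps -> exists Neps : nat, forall n : nat, (Neps <= n)%N ->
       (0 < P [set w | phi lam kap mu t (Jn n w) \in `]gam - eps, gam + eps[%R])%E].

Definition ell {R : realType} (gam a : R) : \bar R :=
  if a < 0 then +oo%E
  else if a == 0 then gam%:E
  else if gam == 0 then +oo%E
  else (gam - a + a * ln (a / gam))%:E.

Definition Irate {R : realType} (S : set R) (a : R) : \bar R :=
  ereal_inf [set ell gam a | gam in S].

(* Main.v *)
Require Import Defs.
From HB Require Import structures.
From mathcomp Require Import all_boot all_order all_algebra.
From mathcomp Require Import all_classical all_reals all_analysis.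
From mathcomp Require Import ring lra.
Import Order.TTheory GRing.Theory Num.Theory.
Import numFieldNormedType.Exports.
Local Open Scope classical_set_scope.
Local Open Scope ring_scope.
From mathcomp Require Import measurable_realfun.
Section EllFacts.
Context {R : realType}.
Implicit Types (a g y : R).

Lemma ln_le_sub1 {y} : 0 < y -> ln y <= y - 1.
Proof.
move=> y0; have := @le_ln1Dx R (y - 1).
have -> : 1 + (y - 1) = y by ring.
by apply; lra.
Qed.

Lemma ln_lt_sub1 {y} : 0 < y -> y != 1 -> ln y < y - 1.
Proof.
move=> y0 y1; set z := Num.sqrt y.
have z0 : 0 < z by rewrite sqrtr_gt0.
have yz : y = z ^+ 2 by rewrite sqr_sqrtr // ltW.
have z1 : z != 1 by apply: contraNneq y1 => h; rewrite yz h expr1n.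
rewrite yz lnXn // mulr2n.
have := ln_le_sub1 z0 => h.
have : 0 < (z - 1) ^+ 2 by rewrite exprn_even_gt0 //= subr_eq0.
rewrite sqrrB1 ; lra.
Qed.

Lemma ell_neg g a : a < 0 -> ell g a = +oo%E.
Proof. by rewrite /ell => ->. Qed.

Lemma ell0 g : ell g 0 = g%:E.
Proof. by rewrite /ell ltxx eqxx. Qed.

Lemma ell_g0 a : 0 < a -> ell 0 a = +oo%E.
Proof. by move=> a0; rewrite /ell ltNge (ltW a0) /= gt_eqF // eqxx. Qed.

Lemma ell_pos g a : 0 < a -> 0 < g ->
  ell g a = (g - a + a * (ln a - ln g))%:E.
Proof.
move=> a0 g0; rewrite /ell ltNge (ltW a0) /= gt_eqF // gt_eqF //.
by rewrite ln_div // ?posrE.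
Qed.

Lemma ell_diag a : 0 <= a -> ell a a = 0%E.
Proof.
rewrite le_eqVlt => /orP[/eqP<-|a0]; first by rewrite ell0.
by rewrite ell_pos // !subrr mulr0 addr0.
Qed.

Lemma ell_incr a g1 g2 : 0 <= a -> a <= g1 -> g1 <= g2 -> (ell g1 a <= ell g2 a)%E.
Proof.
rewrite le_eqVlt => /orP[/eqP<-|a0] ag1 g12; first by rewrite !ell0 lee_fin.
have g10 : 0 < g1 by lra.
have g20 : 0 < g2 by lra.
rewrite !ell_pos // lee_fin.
have h := ln_le_sub1 (divr_gt0 g20 g10).
rewrite ln_div ?posrE // in h.
have e : g2 / g1 - 1 = (g2 - g1) / g1 by field; rewrite gt_eqF.
rewrite e in h.
have h2 : a * (ln g2 - ln g1) <= a * ((g2 - g1) / g1) by rewrite ler_wpM2l // ltW.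
have h3 : a * ((g2 - g1) / g1) <= g1 * ((g2 - g1) / g1).
  by rewrite ler_wpM2r // divr_ge0 //; lra.
have h4 : g1 * ((g2 - g1) / g1) = g2 - g1 by field; rewrite gt_eqF.
lra.
Qed.

Lemma ell_decr a g1 g2 : 0 <= g1 -> g1 <= g2 -> g2 <= a -> (ell g2 a <= ell g1 a)%E.
Proof.
move=> g10 g12 g2a.
have [a0|a0] := eqVneq a 0.
  have e1 : g1 = 0 by lra. have e2 : g2 = 0 by lra.
  by rewrite e1 e2.
have a0' : 0 < a by lra.
have [g1e|g1p] := eqVneq g1 0; first by rewrite g1e ell_g0 // leey.
have g1p' : 0 < g1 by lra.
have g20 : 0 < g2 by lra.
rewrite !ell_pos // lee_fin.
have h := ln_le_sub1 (divr_gt0 g1p' g20).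
rewrite ln_div ?posrE // in h.
have e : g1 / g2 - 1 = - ((g2 - g1) / g2) by field; rewrite gt_eqF.
rewrite e in h.
have h2 : a * ((g2 - g1) / g2) <= a * (ln g2 - ln g1) by rewrite ler_wpM2l //; lra.
have h3 : g2 * ((g2 - g1) / g2) <= a * ((g2 - g1) / g2).
  by rewrite ler_wpM2r // divr_ge0 //; lra.
have h4 : g2 * ((g2 - g1) / g2) = g2 - g1 by field; rewrite gt_eqF.
lra.
Qed.

Lemma ell_ge0 g a : 0 <= g -> (0 <= ell g a)%E.
Proof.
move=> g0; have [a0|a0] := ltP a 0; first by rewrite ell_neg.
rewrite -(@ell_diag _ a0); have [ga|ag] := leP g a.
  exact: ell_decr.
by apply: ell_incr => //; exact: ltW.
Qed.

Lemma ell_gt0 g a : 0 <= g -> g != a -> (0 < ell g a)%E.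
Proof.
move=> g0 ga; have [a0|a0] := ltP a 0; first by rewrite ell_neg.
have [ae|an] := eqVneq a 0.
  by rewrite ae ell0 lte_fin; move: ga; rewrite ae => ?; lra.
have ap : 0 < a by lra.
have [ge|gn] := eqVneq g 0; first by rewrite ge ell_g0.
have gp : 0 < g by lra.
rewrite ell_pos // lte_fin.
have h := ln_lt_sub1 (divr_gt0 gp ap).
have ne : g / a != 1.
  apply: contraNneq ga => hh; have : g = (g / a) * a by field; rewrite gt_eqF.
  by rewrite hh mul1r => ->.
have {}h := h ne; rewrite ln_div ?posrE // in h.
have h2 : a * (ln g - ln a) < a * (g / a - 1) by rewrite ltr_pM2l.
have h4 : a * (g / a - 1) = g - a by field; rewrite gt_eqF.
lra.
Qed.

End EllFacts.
Section Generic.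
Context {R : realType}.
Variable S : set R.
Hypothesis S0 : forall x, S x -> 0 <= x.
Hypothesis Sne : S !=set0.
Hypothesis Scl : forall x, (forall eps, 0 < eps -> exists2 g, S g & `|g - x| < eps) -> S x.

Lemma Irate_le g a : S g -> (Irate S a <= ell g a)%E.
Proof. by move=> Sg; apply: ereal_inf_lbound; exists g. Qed.

Lemma Irate_ge z a : (forall g, S g -> (z <= ell g a)%E) -> (z <= Irate S a)%E.
Proof. by move=> h; apply: le_ereal_inf_tmp => _ [g Sg <-]; exact: h. Qed.

Lemma Irate_neg a : a < 0 -> Irate S a = +oo%E.
Proof.
move=> a0; apply/eqP; rewrite eq_le leey /=; apply: Irate_ge => g _.
by rewrite ell_neg.
Qed.

Lemma sup_inS A : A `<=` S -> A !=set0 -> has_ubound A -> S (sup A).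
Proof.
move=> AS An Au; apply: Scl => eps e0.
have [e Ae He] := sup_adherent e0 (conj An Au).
exists e; first exact: AS.
have := ub_le_sup Au Ae; rewrite ltr_distlC => ?; apply/andP; split; lra.
Qed.

Lemma inf_inS A : A `<=` S -> A !=set0 -> has_lbound A -> S (inf A).
Proof.
move=> AS An Al; apply: Scl => eps e0.
have [e Ae He] := inf_adherent e0 (conj An Al).
exists e; first exact: AS.
have := ge_inf Al Ae; rewrite ltr_distlC => ?; apply/andP; split; lra.
Qed.

Lemma S_lb : has_lbound S.
Proof. by exists 0 => x /S0. Qed.

Lemma Irate_eq0 a : Irate S a = 0%E <-> S a.
Proof.
split; last first.
  move=> Sa; apply/le_anti/andP; split.
    by rewrite -(@ell_diag _ a (S0 _ Sa)); exact: Irate_le.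
  by apply: Irate_ge => g Sg; apply: ell_ge0; exact: S0 Sg.
move=> Ia; apply: contrapT => nSa.
have [d d0 hd] : exists2 d : R, 0 < d & forall g, S g -> d <= `|g - a|.
  apply: contrapT => hn; apply: nSa; apply: Scl => eps e0.
  apply: contrapT => hx; apply: hn; exists eps => // g Sg.
  by rewrite leNgt; apply/negP => hlt; apply: hx; exists g.
have [a0|a0] := ltP a 0; first by move: Ia; rewrite Irate_neg.
suff : (0 < Irate S a)%E by rewrite Ia ltxx.
clear Ia.
have z0 : (0 < ell (a + d)%R a)%E.
  apply: ell_gt0; first lra.
  by rewrite gt_eqF // ltrDl.
have [ad|ad] := leP 0 (a - d).
  have z1 : (0 < ell (a - d)%R a)%E.
    apply: ell_gt0; first lra.
    by rewrite lt_eqF // ltrBlDr ltrDl.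
  have : (0 < Order.min (ell (a + d)%R a) (ell (a - d)%R a))%E.
    by rewrite lt_min z0 z1.
  suff : (Order.min (ell (a + d)%R a) (ell (a - d)%R a) <= Irate S a)%E.
    by move=> h1 h2; exact: lt_le_trans h2 h1.
  apply: Irate_ge => g Sg; have := hd _ Sg; have g0 := S0 _ Sg.
  have [ga|ga] := leP g a.
    rewrite ler0_norm ?subr_le0 // => gd.
    rewrite ge_min; apply/orP; right; apply: ell_decr => //; lra.
  rewrite gtr0_norm ?subr_gt0 // => gd.
  rewrite ge_min; apply/orP; left; apply: ell_incr => //; lra.
suff : (ell (a + d)%R a <= Irate S a)%E.
  by move=> h1; exact: lt_le_trans z0 h1.
apply: Irate_ge => g Sg; have := hd _ Sg; have g0 := S0 _ Sg.
have [ga|ga] := leP g a.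
  rewrite ler0_norm ?subr_le0 // => gd; exfalso; lra.
rewrite gtr0_norm ?subr_gt0 // => gd.
apply: ell_incr => //; lra.
Qed.

Let I := Irate S.

Lemma Irate_eq g a : S g -> (forall h, S h -> (ell g a <= ell h a)%E) -> I a = ell g a.
Proof.
move=> Sg hg; apply/le_anti/andP; split; first exact: Irate_le.
exact: Irate_ge.
Qed.

Lemma Irate_inf_case b : b <= inf S -> I b = ell (inf S) b.
Proof.
move=> bi; have Si : S (inf S) by apply: inf_inS => //; exact: S_lb.
apply: Irate_eq => // h Sh.
have [b0|b0] := ltP b 0; first by rewrite !ell_neg.
apply: ell_incr => //; exact: (ge_inf S_lb) _ Sh.
Qed.

Lemma Irate_sup_case b : has_ubound S -> sup S <= b -> I b = ell (sup S) b.
Proof.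
move=> Su bs; have Ss : S (sup S) by apply: sup_inS.
apply: Irate_eq => // h Sh.
apply: ell_decr => //; first exact: S0.
exact: ub_le_sup Su _ Sh.
Qed.

Lemma generic_part2 a : (0 < I a)%E ->
     let case1 := a < inf S /\
        (forall b : R, b <= inf S -> I b = ell (inf S) b) in
     let case2 := (has_ubound S /\ sup S < a) /\
        (forall b : R, sup S <= b -> I b = ell (sup S) b) in
     let cm := sup (S `&` `]-oo, a[) in
     let cp := inf (S `&` `]a, +oo[) in
     let case3 := ~ (a < inf S) /\ ~ (has_ubound S /\ sup S < a) /\
        (forall b : R, cm <= b <= cp ->
           I b = Order.min (ell cm b) (ell cp b)) in
     [\/ [/\ case1, ~ case2 & ~ case3],
         [/\ ~ case1, case2 & ~ case3] |
         [/\ ~ case1, ~ case2 & case3]].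
Proof.
move=> Ia case1 case2 cm cp case3.
have nSa : ~ S a.
  by move=> /Irate_eq0; rewrite /I in Ia => h; move: Ia; rewrite h ltxx.
have Si : S (inf S) by apply: inf_inS => //; exact: S_lb.
have [ai|ia] := ltP a (inf S).
  apply: Or31; split.
  - by split => // b; exact: Irate_inf_case.
  - move=> [[Su sa] _]; have := ub_le_sup Su Si; lra.
  - by move=> [].
have [[Su sa]|nc2] := pselect (has_ubound S /\ sup S < a).
  apply: Or32; split.
  - by move=> [] h _; move: ia; rewrite leNgt h.
  - by split => // b; exact: Irate_sup_case.
  - by move=> [_ [h _]]; apply: h.
apply: Or33; split.
- by move=> [] h _; move: ia; rewrite leNgt h.
- by move=> [h _]; apply: nc2.
split; first by rewrite ltNge ia.
split => //.
have ina : inf S < a by rewrite lt_neqAle ia andbT; apply/eqP => h; apply: nSa; rewrite -h.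
have Am : (S `&` `]-oo, a[) !=set0 by exists (inf S); split => //=; rewrite in_itv.
have Amu : has_ubound (S `&` `]-oo, a[).
  by exists a => x [_] /=; rewrite in_itv /= => /ltW.
have Scm : S cm by apply: sup_inS => // x [].
have cma : cm < a.
  have : cm <= a by apply: ge_sup => // x [_] /=; rewrite in_itv /= => /ltW.
  by rewrite le_eqVlt => /orP[/eqP h|//]; exfalso; apply: nSa; rewrite -h.
have Ap : (S `&` `]a, +oo[) !=set0.
  have [Su|nSu] := pselect (has_ubound S).
    have Ss : S (sup S) by apply: sup_inS.
    exists (sup S); split => //=; rewrite in_itv /= andbT.
    have : a <= sup S by rewrite leNgt; apply/negP => h; apply: nc2.
    by rewrite le_eqVlt => /orP[/eqP h|//]; exfalso; apply: nSa; rewrite h.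
  apply: contrapT => hn; apply: nSu; exists a => x Sx.
  rewrite leNgt; apply/negP => xa; apply: hn; exists x; split => //=.
  by rewrite in_itv /= xa.
have Apl : has_lbound (S `&` `]a, +oo[).
  by exists a => x [_] /=; rewrite in_itv /= andbT => /ltW.
have Scp : S cp by apply: inf_inS => // x [].
have acp : a < cp.
  have : a <= cp by apply: lb_le_inf => // x [_] /=; rewrite in_itv /= andbT => /ltW.
  by rewrite le_eqVlt => /orP[/eqP h|//]; exfalso; apply: nSa; rewrite h.
have gap : forall g, S g -> g <= cm \/ cp <= g.
  move=> g Sg; have [ga|ag] := ltP g a.
    by left; apply: ub_le_sup Amu _ _; split => //=; rewrite in_itv.
  have : a < g by rewrite lt_neqAle ag andbT; apply/eqP => h; apply: nSa; rewrite h.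
  by move=> ag'; right; apply: ge_inf Apl _ _; split => //=; rewrite in_itv /= ag'.
move=> b /andP[cmb bcp].
have cm0 : 0 <= cm := S0 _ Scm.
apply/le_anti/andP; split.
  by rewrite le_min !Irate_le.
apply: Irate_ge => g Sg; have g0 := S0 _ Sg.
rewrite ge_min; case: (gap g Sg) => h; apply/orP.
  by left; apply: ell_decr => //.
right; apply: ell_incr => //; lra.
Qed.

End Generic.
Section Grid.
Context {R : realType}.

Definition grid (n : nat) (y : R) : R := (Num.truncn (y * n.+1%:R)).+1%:R / n.+1%:R.

Lemma grid_gt n {y} : 0 <= y -> y < grid n y.
Proof.
move=> y0; rewrite /grid ltr_pdivlMr ?ltr0n //.
exact: truncnS_gt.
Qed.

Lemma grid_le n {y} : 0 <= y -> grid n y <= y + n.+1%:R^-1.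
Proof.
move=> y0; rewrite /grid ler_pdivrMr ?ltr0n // mulrDl mulVf ?pnatr_eq0 //.
rewrite -natr1 lerD2r truncn_le.
by apply: mulr_ge0.
Qed.

Lemma grid_cvg {y} : 0 <= y -> grid n y @[n --> \oo] --> y.
Proof.
move=> y0; apply/cvgrPdist_lt => e e0; near=> n.
have h1 := grid_gt n y0; have h2 := grid_le n y0.
have h3 : n.+1%:R^-1 < e.
  near: n; exists (Num.truncn e^-1) => // n /= Nn.
  rewrite invf_plt ?posrE ?ltr0n //.
  apply: lt_le_trans (truncnS_gt _) _.
  by rewrite ler_nat.
rewrite distrC ger0_norm. set u := n.+1%:R^-1 in h2 h3. lra. lra.
Unshelve. all: by end_near.
Qed.

End Grid.
Section JointMeas.
Context {R : realType} {E : pseudoMetricType R} {d : measure_display}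
  {Omega : measurableType d}.
Variable J : Omega -> R -> E.
Hypothesis J_meas : forall s : R, 0 <= s -> forall B : set E, borel_set B ->
     measurable [set w | B (J w s)].
Hypothesis J_rc : forall w s, 0 <= s -> J w x @[x --> s^'+] --> J w s.

Lemma borel_open (B : set E) : open B -> borel_set B.
Proof. by move=> oB; apply: sub_sigma_algebra. Qed.

Lemma meas_cont_J (g : E -> R) s (x : R) : continuous g -> 0 <= s ->
  measurable [set w | g (J w s) < x].
Proof.
move=> gc s0.
have := @J_meas s s0 _ (@borel_open _ (proj1 (continuousP g) gc _ (@lray_open _ _ x))).
by congr measurable; apply/seteqP; split => w /=; rewrite in_itv.
Qed.

Lemma meas_trunc (m : R) k : 0 <= m -> measurable [set r : R | Num.truncn (Num.max 0 r * m) = k].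
Proof.
move=> m0.
have mf : measurable_fun setT (fun r : R => Num.max 0 r * m).
  apply: measurable_realfun.measurable_funM => //; apply: measurable_realfun.measurable_maxr => //.
have := mf measurableT _ (measurable_itv `[k%:R, k.+1%:R[).
rewrite setTI; congr measurable; apply/seteqP; split => r /=; rewrite in_itv /=.
  by move=> /andP[h1 h2]; apply: truncn_def; rewrite h1 h2.
move=> <-; apply: truncn_itv; apply: mulr_ge0 => //.
by rewrite le_max lexx.
Qed.

Definition Gfun (g : E -> R) (z : Omega * R) : R := g (J z.1 (Num.max 0 z.2)).

Lemma Gfun_meas (g : E -> R) : continuous g -> measurable_fun setT (Gfun g).
Proof.
move=> gc.
apply: (measurable_realfun.measurable_fun_cvg
  (h := fun n (z : Omega * R) => g (J z.1 (grid n (Num.max 0 z.2))))).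
- move=> n; apply: (measurability _ (measurable_realfun.RGenInftyO.measurableE R)).
  move=> _ [_ [x ->] <-].
  rewrite setTI.
  have -> : (fun z : Omega * R => g (J z.1 (grid n (Num.max 0 z.2)))) @^-1` `]-oo, x[ =
    \bigcup_k ([set w | g (J w (k.+1%:R / n.+1%:R)) < x] `*`
                [set r : R | Num.truncn (Num.max 0 r * n.+1%:R) = k]).
    apply/seteqP; split => [[w r]|[w r]] /=.
      by rewrite in_itv /= /grid => h; exists (Num.truncn (Num.max 0 r * n.+1%:R)).
    by move=> [k _ /= [h hk]]; rewrite in_itv /= /grid hk.
  apply: bigcupT_measurable => k; apply: measurableX.
    by apply: meas_cont_J => //; apply: divr_ge0.
  exact: meas_trunc.
- move=> [w r] _ /=.
  have y0 : 0 <= Num.max 0 r by rewrite le_max lexx.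
  have hc : (g \o J w) x @[x --> (Num.max 0 r)^'+] --> g (J w (Num.max 0 r)).
    exact: cvg_comp (J_rc w _ y0) (gc _).
  have := proj1 (cvg_at_rightP _ _ _) hc (grid ^~ (Num.max 0 r)).
  move=> /(_ (conj (fun n => grid_gt n y0) (grid_cvg y0))).
  by rewrite /Gfun.
Qed.

End JointMeas.
Section PhiMeas.
Context {R : realType} {E : pseudoMetricType R} {d : measure_display}
  {Omega : measurableType d}.
Variable J : Omega -> R -> E.
Hypothesis J_meas : forall s : R, 0 <= s -> forall B : set E, borel_set B ->
     measurable [set w | B (J w s)].
Hypothesis J_rc : forall w s, 0 <= s -> J w x @[x --> s^'+] --> J w s.
Variables (lam kap mu : E -> R).
Hypotheses (lam_ge0 : forall x, 0 <= lam x) (kap_ge0 : forall x, 0 <= kap x)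
  (mu_ge0 : forall x, 0 <= mu x).
Hypotheses (lam_cont : continuous lam) (kap_cont : continuous kap)
  (mu_cont : continuous mu).
Variable t : R.



Definition A1 : set ((Omega * R) * R) := [set q | q.1.2 <= q.2 /\ q.2 <= t].

Lemma A1_meas : measurable A1.
Proof.
have m1 : measurable_fun setT (fun q : (Omega * R) * R => q.2 - q.1.2).
  apply: measurable_realfun.measurable_funB => //.
  exact: measurableT_comp.
have m2 : measurable_fun setT (fun q : (Omega * R) * R => q.2) by exact: measurable_snd.
have := m1 measurableT _ (measurable_itv `[0, +oo[).
have := m2 measurableT _ (measurable_itv `]-oo, t]).
rewrite !setTI => h2 h1.
have -> : A1 = ((fun q : (Omega * R) * R => q.2 - q.1.2) @^-1` `[0, +oo[) `&`
   ((fun q : (Omega * R) * R => q.2) @^-1` `]-oo, t]).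
  apply/seteqP; split => q /=; rewrite !in_itv /= andbT subr_ge0.
    by move=> [u1 u2]; split.
  by move=> [u1 u2]; split.
exact: measurableI.
Qed.

Definition F1 (p : (Omega * R) * R) : \bar R :=
  ((\1_A1 p : R) * Gfun J mu (p.1.1, p.2))%:E.

Lemma F1_meas : measurable_fun [set: (Omega * R) * R] F1.
Proof.
apply/measurable_EFinP; apply: measurable_realfun.measurable_funM.
  exact: measurable_indic A1_meas.
have mp : measurable_fun setT (fun p : (Omega * R) * R => (p.1.1, p.2)).
  apply: measurable_fun_pair => //.
  exact: measurableT_comp.
have mg := @Gfun_meas _ _ _ _ J J_meas J_rc mu mu_cont.
exact: (measurableT_comp mg mp).
Qed.

Lemma indic_ge0' T (A : set T) x : (0 : R) <= \1_A x.
Proof. by rewrite indicE; case: (_ \in _). Qed.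

Lemma F1_ge0 p : (0 <= F1 p)%E.
Proof. by rewrite lee_fin mulr_ge0 // ?indic_ge0' // /Gfun mu_ge0. Qed.

Definition K (z : Omega * R) : R := fine (fubini_F (@lebesgue_measure R) F1 z).

Lemma K_meas : measurable_fun setT K.
Proof.
apply: measurableT_comp (measurable_realfun.fine_measurable measurableT) _.
exact: (@measurable_fun_fubini_tonelli_F _ _ _ _ _ lebesgue_measure F1 F1_meas F1_ge0).
Qed.

Lemma K_eq w s : 0 <= s ->
  K (w, s) = Rintegral lebesgue_measure `[s, t] (fun r => mu (J w r)).
Proof.
move=> s0; rewrite /K /fubini_F /Rintegral; congr fine.
rewrite [RHS]integral_mkcond; apply: eq_integral => r _.
rewrite patchE /F1 /Gfun /= indicE /A1.
case: ifPn => h.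
  move: h; rewrite inE /= in_itv /= => /andP[sr rt].
  rewrite mem_set /=; last by split.
  by rewrite mul1r max_r //; apply: le_trans sr.
rewrite memNset ?mul0r //=.
move=> [sr rt]; move/negP: h; apply; rewrite inE /= in_itv /=.
by rewrite sr rt.
Qed.

Definition A2 : set (Omega * R) := [set q | 0 <= q.2 /\ q.2 <= t].

Lemma A2_meas : measurable A2.
Proof.
have m2 : measurable_fun setT (fun q : Omega * R => q.2) by exact: measurable_snd.
have := m2 measurableT _ (measurable_itv `[0, t]).
rewrite setTI; congr measurable; apply/seteqP; split => q /=; rewrite in_itv /=.
  by move=> /andP[u1 u2]; split.
by move=> [-> ->].
Qed.

Definition F2 (z : Omega * R) : \bar R :=
  ((\1_A2 z : R) * (Gfun J lam z * expR (- (Gfun J kap z * K z))))%:E.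

Lemma F2_meas : measurable_fun setT F2.
Proof.
apply/measurable_EFinP; apply: measurable_realfun.measurable_funM.
  exact: measurable_indic A2_meas.
apply: measurable_realfun.measurable_funM.
  exact: (@Gfun_meas _ _ _ _ J J_meas J_rc lam lam_cont).
have m : measurable_fun setT (fun z : Omega * R => - (Gfun J kap z * K z)).
  apply: measurable_realfun.measurable_funN.
  apply: measurable_realfun.measurable_funM.
    exact: (@Gfun_meas _ _ _ _ J J_meas J_rc kap kap_cont).
  exact: K_meas.
exact: (measurableT_comp (@measurable_expR R) m).
Qed.

Lemma F2_ge0 z : (0 <= F2 z)%E.
Proof.
rewrite lee_fin mulr_ge0 // ?indic_ge0' // mulr_ge0 // ?expR_ge0 //.
exact: lam_ge0.
Qed.

Definition Xfun (w : Omega) : R := fine (fubini_F (@lebesgue_measure R) F2 w).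

Lemma Xfun_meas : measurable_fun setT Xfun.
Proof.
apply: measurableT_comp (measurable_realfun.fine_measurable measurableT) _.
exact: (@measurable_fun_fubini_tonelli_F _ _ _ _ _ lebesgue_measure F2 F2_meas F2_ge0).
Qed.

Lemma Xfun_eq w : phi lam kap mu t (J w) = Xfun w.
Proof.
rewrite /Xfun /fubini_F /phi /Rintegral; congr fine.
rewrite [LHS]integral_mkcond; apply: eq_integral => s _.
rewrite patchE /F2 /Gfun /= indicE /A2.
case: ifPn => h.
  move: h; rewrite inE /= in_itv /= => /andP[s0 st].
  rewrite mem_set /=; last by split.
  by rewrite mul1r max_r // K_eq.
rewrite memNset ?mul0r //=.
move=> [s0 st]; move/negP: h; apply; rewrite inE /= in_itv /=.
by rewrite s0 st.
Qed.

End PhiMeas.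
Section Final.
Context {R : realType} {d : measure_display} {Omega : measurableType d}
  (P : probability Omega R) (X : Omega -> R).
Hypothesis mX : measurable_fun setT X.
Hypothesis X0 : forall w, 0 <= X w.

Let S := [set gam : R | 0 <= gam /\ forall eps : R, 0 < eps ->
   (0 < P [set w | X w \in `]gam - eps, gam + eps[%R])%E].

Lemma mXitv (i : interval R) : measurable [set w | X w \in i].
Proof.
have := mX measurableT _ (measurable_itv i).
by rewrite setTI.
Qed.

Lemma S_closed x : (forall eps, 0 < eps -> exists2 g, S g & `|g - x| < eps) -> S x.
Proof.
move=> h; split.
  rewrite leNgt; apply/negP => x0.
  have [g [g0 _] hg] := h (- x) ltac:(lra).
  move: hg; rewrite ltr_norml => /andP[_]; lra.
move=> eps e0.
have [g [g0 hg] gx] := h (eps / 2) ltac:(lra).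
apply: lt_le_trans (hg (eps / 2) ltac:(lra)) _.
apply: le_measure; rewrite ?inE; try exact: mXitv.
move=> w /=; rewrite !in_itv /= => /andP[u1 u2].
move: gx; rewrite ltr_norml => /andP[v1 v2].
apply/andP; split; lra.
Qed.

Lemma S_ne : S !=set0.
Proof.
pose A := [set x : R | P [set w | X w < x] = 0%E].
have mlt x : measurable [set w | X w < x].
  have := mXitv `]-oo, x[; congr measurable; apply/seteqP; split => w /=;
    by rewrite in_itv.
have A0 : A 0.
  rewrite /A /=; have -> : [set w | X w < 0] = set0.
    by apply/seteqP; split => w //=; rewrite ltNge X0.
  exact: measure0.
have [n Pn] : exists n : nat, P [set w | X w < n%:R] != 0%E.
  apply: contrapT => hn.
  have : (P setT <= \sum_(0 <= k <oo) P [set w | (X w < k%:R)%R])%E.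
    apply: measure_sigma_subadditive => //.
    move=> w _; exists (Num.truncn (X w)).+1 => //=.
    exact: truncnS_gt.
  rewrite probability_setT eseries0 ?lee_fin ?ler10 //.
  move=> k _ _; apply/eqP; apply: contrapT => hk; apply: hn; exists k; exact/negP.
have Aub : has_ubound A.
  exists n%:R => x Ax; rewrite leNgt; apply/negP => nx.
  move: Pn; rewrite eq_le measure_ge0 andbT; move/negP; apply.
  by rewrite -Ax le_measure ?inE // => w /= /lt_trans; apply.
have Ane : A !=set0 by exists 0.
exists (sup A); split; first exact: ub_le_sup Aub _ A0.
move=> eps e0; rewrite lt_neqAle measure_ge0 andbT eq_sym.
apply/negP => /eqP Pi.
have [x' Ax' hx'] := sup_adherent e0 (conj Ane Aub).
have : A (sup A + eps).
  apply/eqP; rewrite eq_le measure_ge0 andbT.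
  have h2 := measureU2 P (mlt x') (mXitv `](sup A - eps), (sup A + eps)[).
  have E1 : (P : {content set Omega -> \bar R}) [set w | (X w < x')%R] = 0%E := Ax'.
  have E2 : (P : {content set Omega -> \bar R})
     [set w | X w \in `](sup A - eps), (sup A + eps)[] = 0%E := Pi.
  rewrite E1 E2 adde0 in h2; apply: le_trans h2.
  apply: le_measure.
  - by rewrite inE; exact: mlt.
  - by rewrite inE; apply: measurableU; [exact: mlt|exact: mXitv].
  move=> w /= h; have [hw|hw] := ltP (X w) x'; [left|right] => //.
  by rewrite in_itv /= h andbT; lra.
move/(ub_le_sup Aub); lra.
Qed.

End Final.
Theorem proposition1 (R : realType) (E : pseudoMetricType R)
  (HE : hausdorff_space E)
  (lam kap mu : E -> R)
  (lam_ge0 : forall x, 0 <= lam x) (kap_ge0 : forall x, 0 <= kap x)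
  (mu_ge0 : forall x, 0 <= mu x)
  (lam_cont : continuous lam) (kap_cont : continuous kap)
  (mu_cont : continuous mu)
  (t : R) (t_ge0 : 0 <= t)
  (d : measure_display) (Omega : measurableType d) (P : probability Omega R)
  (J : Omega -> R -> E)
  (J_meas : forall s : R, 0 <= s -> forall B : set E, borel_set B ->
     measurable [set w | B (J w s)])
  (J_cadlag : forall w, cadlag (J w)) :
  let Rt := attainable P lam kap mu t (fun _ : nat => J) in
  let I := Irate Rt in
  (forall a : R, I a = 0%E <-> Rt a) /\
  (forall a : R, (0 < I a)%E ->
     let case1 := a < inf Rt /\
        (forall b : R, b <= inf Rt -> I b = ell (inf Rt) b) in
     let case2 := (has_ubound Rt /\ sup Rt < a) /\
        (forall b : R, sup Rt <= b -> I b = ell (sup Rt) b) in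
     let cm := sup (Rt `&` `]-oo, a[) in
     let cp := inf (Rt `&` `]a, +oo[) in
     let case3 := ~ (a < inf Rt) /\ ~ (has_ubound Rt /\ sup Rt < a) /\
        (forall b : R, cm <= b <= cp ->
           I b = Order.min (ell cm b) (ell cp b)) in
     [\/ [/\ case1, ~ case2 & ~ case3],
         [/\ ~ case1, case2 & ~ case3] |
         [/\ ~ case1, ~ case2 & case3]]).
Proof.
move=> Rt I.
have J_rc : forall w s, 0 <= s -> J w x @[x --> s^'+] --> J w s.
  by move=> w s s0; exact: (J_cadlag w).1 s s0.
pose X w := phi lam kap mu t (J w).
have mX : measurable_fun setT X.
  have -> : X = Xfun J lam kap mu t by apply/funext => w; rewrite /X Xfun_eq.
  exact: Xfun_meas.
have X0 : forall w, 0 <= X w.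
  move=> w; rewrite /X /phi /Rintegral; apply: fine_ge0; apply: integral_ge0.
  by move=> s _; rewrite lee_fin mulr_ge0 // expR_ge0.
have hR : forall g, Rt g <-> (0 <= g /\ forall eps : R, 0 < eps ->
   (0 < P [set w | X w \in `]g - eps, g + eps[%R])%E).
  move=> g; split.
    move=> [g0 h]; split => // eps e0; have [N hN] := h eps e0.
    exact: hN N (leqnn N).
  by move=> [g0 h]; split => // eps e0; exists 0%N => n _; exact: h.
have S0 : forall x, Rt x -> 0 <= x by move=> x [].
have Sne : Rt !=set0.
  have [g hg] := @S_ne _ _ _ P X mX X0; exists g; exact/hR.
have Scl : forall x, (forall eps, 0 < eps -> exists2 g, Rt g & `|g - x| < eps) -> Rt x.
  move=> x h; apply/hR; apply: (@S_closed _ _ _ P X mX) => eps e0.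
  by have [g /hR Rg gx] := h eps e0; exists g.
split; first by move=> a; exact: (@Irate_eq0 _ Rt S0 Scl a).
move=> a Ia; exact: (@generic_part2 _ Rt S0 Sne Scl a Ia).
Qed.
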